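(* Let $(\mathcal{Z},\nu)$ be a measurable space with a $\sigma$-finite measure $\nu$, let $P$ be a probability measure on $\mathcal{Z}$ with $P\ll\nu$ and density $\rho=dP/d\nu$ satisfying $\rho>0$ $\nu$-almost everywhere. Let $\omega:\mathcal{Z}\times\mathcal{Z}\to[0,\infty)$ be measurable and symmetric, $\omega(z,\tilde z)=\omega(\tilde z,z)$, and assume $$C_\rho:=\iint\frac{(\rho(z)-\rho(\tilde z))^2}{\rho(z)+\rho(\tilde z)}\,\omega(z,\tilde z)\,\nu(dz)\nu(d\tilde z)<\infty,\qquad \iint\rho(z)\,\omega(z,\tilde z)\,\nu(dz)\nu(d\tilde z)<\infty.$$ For a measurable $f_\theta:\mathcal{Z}\to\mathbb{R}$ define $T_\theta(z,\tilde z)=\tanh\big((f_\theta(z)-f_\theta(\tilde z))/2\big)$, $$\mathcal{J}_\omega(\theta)=\iint\left[T_\theta(z,\tilde z)-\frac{\rho(z)-\rho(\tilde z)}{\rho(z)+\rho(\tilde z)}\right]^2(\rho(z)+\rho(\tilde z))\,\omega(z,\tilde z)\,\nu(dz)\nu(d\tilde z),$$ $$\mathcal{L}_\omega(\theta)=\iint\big[T_\theta(z,\tilde z)-1\big]^2\,\omega(z,\tilde z)\,\rho(z)\,\nu(dz)\nu(d\tilde z).$$ Then $\mathcal{J}_\omega(\theta)=2\mathcal{L}_\omega(\theta)+C_\rho'$, where $C_\rho'=C_\rho-2\iint\rho(z)\omega(z,\tilde z)\,\nu(dz)\nu(d\tilde z)$ does not depend on $f_\theta$. In particular, minimizing $\mathcal{J}_\omega$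 over $f_\theta$ is equivalent to minimizing $\mathcal{L}_\omega$.
   Context: $f_\theta$ is a scalar ''energy'' function parameterized by $\theta$; all statements concern the dependence on the function $f_\theta$. *)

(* Defs.v *)
From HB Require Import structures.
From mathcomp Require Import all_boot all_order all_algebra.
From mathcomp Require Import all_classical all_reals all_analysis.
Set Implicit Arguments. Unset Strict Implicit. Unset Printing Implicit Defensive.
Import Order.TTheory GRing.Theory Num.Theory.
Local Open Scope ring_scope.

Definition tanh {R : realType} (x : R) : R :=
  (expR x - expR (- x)) / (expR x + expR (- x)).

Definition Tth {R : realType} {T : Type} (f : T -> R) (z zt : T) : R :=
  tanh ((f z - f zt) / 2).

Local Open Scope ereal_scope.

Definition iint {d} {T : measurableType d} {R : realType}
  (nu : {measure set T -> \bar R}) (F : T -> T -> R) : \bar R :=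
  \int[nu]_z \int[nu]_zt (F z zt)%:E.

Definition C_rho {d} {T : measurableType d} {R : realType}
  (nu : {measure set T -> \bar R}) (rho : T -> R) (omega : T -> T -> R) : \bar R :=
  iint nu (fun z zt => ((rho z - rho zt) ^+ 2 / (rho z + rho zt) * omega z zt)%R).

Definition I_rho {d} {T : measurableType d} {R : realType}
  (nu : {measure set T -> \bar R}) (rho : T -> R) (omega : T -> T -> R) : \bar R :=
  iint nu (fun z zt => (rho z * omega z zt)%R).

Definition J_omega {d} {T : measurableType d} {R : realType}
  (nu : {measure set T -> \bar R}) (rho : T -> R) (omega : T -> T -> R)
  (f : T -> R) : \bar R :=
  iint nu (fun z zt =>
    ((Tth f z zt - (rho z - rho zt) / (rho z + rho zt)) ^+ 2
       * (rho z + rho zt) * omega z zt)%R).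

Definition L_omega {d} {T : measurableType d} {R : realType}
  (nu : {measure set T -> \bar R}) (rho : T -> R) (omega : T -> T -> R)
  (f : T -> R) : \bar R :=
  iint nu (fun z zt => ((Tth f z zt - 1) ^+ 2 * omega z zt * rho z)%R).

(* Main.v *)
Require Import Defs.
From HB Require Import structures.
From mathcomp Require Import all_boot all_order all_algebra.
From mathcomp Require Import all_classical all_reals all_analysis.
From mathcomp Require Import measurable_realfun.
From mathcomp Require Import ring lra.
Import Order.TTheory GRing.Theory Num.Theory.
Local Open Scope classical_set_scope.
Local Open Scope ring_scope.

Lemma measurable_inv (R : realType) : measurable_fun setT (@GRing.inv R).
Proof.
rewrite -(setUv [set (0:R)]).
apply/measurable_funU => //.
  exact: measurableC.
split; first exact: measurable_fun_set1.
apply: open_continuous_measurable_fun.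
  by rewrite openC; apply: accessible_closed_set1; apply: hausdorff_accessible; exact: Rhausdorff.
move=> x; rewrite inE /= => /eqP x0; exact: inv_continuous.
Qed.

Section S.
Context d (T : measurableType d) (R : realType) (nu : {measure set T -> \bar R}).
Hypothesis nuS : sigma_finite setT nu.
Definition snu : set T -> \bar R := nu.
HB.instance Definition _ := Measure.copy snu nu.
HB.instance Definition _ := Measure_isSigmaFinite.Build d T R snu nuS.

Local Open Scope ereal_scope.

Lemma iint_swap (G : T * T -> R) : measurable_fun setT G -> (forall p, (0 <= G p)%R) ->
  \int[nu]_z \int[nu]_zt (G (zt, z))%:E = \int[nu]_z \int[nu]_zt (G (z, zt))%:E.
Proof.
move=> mG G0.
rewrite [RHS](@fubini_tonelli _ _ _ _ _ snu snu (EFin \o G)) //=.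
all: try exact/measurable_EFinP.
all: try by move=> p; rewrite lee_fin.
Qed.

Lemma iintD (F1 F2 : T * T -> R) :
  measurable_fun setT F1 -> measurable_fun setT F2 ->
  (forall p, (0 <= F1 p)%R) -> (forall p, (0 <= F2 p)%R) ->
  \int[nu]_z \int[nu]_zt (F1 (z, zt) + F2 (z, zt))%:E =
  \int[nu]_z \int[nu]_zt (F1 (z, zt))%:E + \int[nu]_z \int[nu]_zt (F2 (z, zt))%:E.
Proof.
move=> m1 m2 p1 p2.
have inner z : \int[nu]_zt (F1 (z, zt) + F2 (z, zt))%:E =
    \int[nu]_zt (F1 (z, zt))%:E + \int[nu]_zt (F2 (z, zt))%:E.
  under eq_integral do rewrite EFinD.
  apply: ge0_integralD => //.
  - by move=> ? _; rewrite lee_fin.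
  - exact/measurable_EFinP/measurableT_comp.
  - by move=> ? _; rewrite lee_fin.
  - exact/measurable_EFinP/measurableT_comp.
under eq_integral do rewrite inner.
apply: ge0_integralD => //.
- by move=> ? _; apply: integral_ge0 => ? _; rewrite lee_fin.
- apply: (@measurable_fun_fubini_tonelli_F _ _ _ _ _ snu (EFin \o F1)).
  + exact/measurable_EFinP.
  + by move=> ?; rewrite lee_fin.
- by move=> ? _; apply: integral_ge0 => ? _; rewrite lee_fin.
- apply: (@measurable_fun_fubini_tonelli_F _ _ _ _ _ snu (EFin \o F2)).
  + exact/measurable_EFinP.
  + by move=> ?; rewrite lee_fin.
Qed.
End S.

Lemma measurable_tanh (R : realType) : measurable_fun setT (@tanh R).
Proof.
rewrite /tanh.
apply: measurable_funM.
  apply: measurable_funB; first exact: measurable_expR.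
  exact: measurableT_comp (@measurable_expR R) _.
apply: (measurableT_comp (measurable_inv R)).
apply: measurable_funD; first exact: measurable_expR.
exact: measurableT_comp (@measurable_expR R) _.
Qed.

Lemma tanhN (R : realType) (x : R) : tanh (- x) = - tanh x.
Proof.
rewrite /tanh opprK (addrC (expR (- x)) (expR x)) -(opprB (expR x) (expR (- x))).
by rewrite mulNr.
Qed.

Lemma TthN (R : realType) (T : Type) (f : T -> R) z zt : Tth f zt z = - Tth f z zt.
Proof. by rewrite /Tth -tanhN -mulNr opprB. Qed.

Lemma pointwise (R : realType) (a b w t : R) : 0 <= a -> 0 <= b ->
  (t - (a - b) / (a + b)) ^+ 2 * (a + b) * w + (a * w + b * w) =
  (t - 1) ^+ 2 * w * a + ((- t - 1) ^+ 2 * w * b + (a - b) ^+ 2 / (a + b) * w).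
Proof.
move=> a0 b0.
have [s0|s0] := eqVneq (a + b) 0.
  have -> : a = 0 by lra.
  have -> : b = 0 by lra.
  ring.
field; exact: s0.
Qed.

Local Open Scope ereal_scope.
Lemma ealg (R : realType) (J L C I : \bar R) : I \is a fin_num ->
  J + (I + I) = L + (L + C) -> J = 2%:E * L + (C - 2%:E * I).
Proof.
move=> If e.
have II : (I + I) \is a fin_num by rewrite fin_numD If.
rewrite -[J](addeK _ II) e.
have two : forall x : \bar R, 2%:E * x = x + x.
  by move=> x; rewrite -mule2n -mule_natl.
by rewrite !two addeA [RHS]addeA.
Qed.

Local Open Scope ring_scope.
Theorem theorem1 (d : measure_display) (T : measurableType d) (R : realType)
  (nu : {measure set T -> \bar R}) (P : probability T R)
  (rho : T -> R) (omega : T -> T -> R) :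
  sigma_finite setT nu ->
  measurable_fun setT rho ->
  (forall z, 0 <= rho z) ->
  (forall A, measurable A -> P A = (\int[nu]_(z in A) (rho z)%:E)%E) ->
  {ae nu, forall z, 0 < rho z} ->
  measurable_fun setT (fun p : T * T => omega p.1 p.2) ->
  (forall z zt, 0 <= omega z zt) ->
  (forall z zt, omega z zt = omega zt z) ->
  (C_rho nu rho omega < +oo)%E ->
  (I_rho nu rho omega < +oo)%E ->
  forall f : T -> R, measurable_fun setT f ->
    J_omega nu rho omega f
    = (2%:E * L_omega nu rho omega f + (C_rho nu rho omega - 2%:E * I_rho nu rho omega))%E.
Proof.
move=> nuS mrho rho0 _ _ mom om0 omsym Cfin Ifin f mf.
have ma : measurable_fun setT (fun p : T * T => rho p.1) :=
  measurableT_comp mrho measurable_fst.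
have mb : measurable_fun setT (fun p : T * T => rho p.2) :=
  measurableT_comp mrho measurable_snd.
have mom' : measurable_fun setT (fun p : T * T => omega p.2 p.1).
  rewrite (_ : (fun p : T * T => omega p.2 p.1) = (fun p => omega p.1 p.2)) //.
  by apply: funext => p; rewrite omsym.
have mt : measurable_fun setT (fun p : T * T => Tth f p.1 p.2).
  apply: (measurableT_comp (measurable_tanh R)).
  apply: measurable_funM => //.
  apply: measurable_funB.
    exact: measurableT_comp mf measurable_fst.
  exact: measurableT_comp mf measurable_snd.
have mt' : measurable_fun setT (fun p : T * T => Tth f p.2 p.1).
  rewrite (_ : (fun p : T * T => Tth f p.2 p.1) = (fun p => - Tth f p.1 p.2)).
    exact: measurable_funN.
  by apply: funext => p; rewrite TthN.
have minvs : measurable_fun setT (fun p : T * T => (rho p.1 + rho p.2)^-1).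
  apply: (measurableT_comp (measurable_inv R)).
  exact: measurable_funD.
pose G0 := fun p : T * T => (Tth f p.1 p.2 - (rho p.1 - rho p.2) / (rho p.1 + rho p.2)) ^+ 2
   * (rho p.1 + rho p.2) * omega p.1 p.2.
pose G1 := fun p : T * T => rho p.1 * omega p.1 p.2.
pose G2 := fun p : T * T => rho p.2 * omega p.2 p.1.
pose H0 := fun p : T * T => (Tth f p.1 p.2 - 1) ^+ 2 * omega p.1 p.2 * rho p.1.
pose H1 := fun p : T * T => (Tth f p.2 p.1 - 1) ^+ 2 * omega p.2 p.1 * rho p.2.
pose H2 := fun p : T * T => (rho p.1 - rho p.2) ^+ 2 / (rho p.1 + rho p.2) * omega p.1 p.2.
have mG0 : measurable_fun setT G0.
  apply: measurable_funM => //; apply: measurable_funM; last exact: measurable_funD.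
  apply: measurable_funX; apply: measurable_funB => //.
  by apply: measurable_funM => //; exact: measurable_funB.
have mG1 : measurable_fun setT G1 by exact: measurable_funM.
have mG2 : measurable_fun setT G2 by exact: measurable_funM.
have mH0 : measurable_fun setT H0.
  apply: measurable_funM => //; apply: measurable_funM => //.
  by apply: measurable_funX; apply: measurable_funB.
have mH1 : measurable_fun setT H1.
  apply: measurable_funM => //; apply: measurable_funM => //.
  by apply: measurable_funX; apply: measurable_funB.
have mH2 : measurable_fun setT H2.
  apply: measurable_funM => //; apply: measurable_funM => //.
  by apply: measurable_funX; apply: measurable_funB.
have s0 p : 0 <= rho p.1 + rho p.2 by rewrite addr_ge0.
have pG0 p : 0 <= G0 p.
  by rewrite /G0; apply: mulr_ge0 => //; apply: mulr_ge0 => //; exact: sqr_ge0.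
have pG1 p : 0 <= G1 p by rewrite /G1; apply: mulr_ge0.
have pG2 p : 0 <= G2 p by rewrite /G2; apply: mulr_ge0.
have pH0 p : 0 <= H0 p.
  by rewrite /H0; apply: mulr_ge0 => //; apply: mulr_ge0 => //; exact: sqr_ge0.
have pH1 p : 0 <= H1 p.
  by rewrite /H1; apply: mulr_ge0 => //; apply: mulr_ge0 => //; exact: sqr_ge0.
have pH2 p : 0 <= H2 p.
  rewrite /H2; apply: mulr_ge0 => //; apply: mulr_ge0; first exact: sqr_ge0.
  by rewrite invr_ge0.
have eq1 : (\int[nu]_z \int[nu]_zt (G0 (z, zt) + (G1 (z, zt) + G2 (z, zt)))%:E =
  J_omega nu rho omega f + (I_rho nu rho omega + I_rho nu rho omega))%E.
  have h1 := @iintD _ _ _ nu nuS G0 (fun p => G1 p + G2 p) mG0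
    (measurable_funD mG1 mG2) pG0 (fun p => addr_ge0 (pG1 p) (pG2 p)).
  have h2 := @iintD _ _ _ nu nuS G1 G2 mG1 mG2 pG1 pG2.
  have h3 : (\int[nu]_z \int[nu]_zt (G2 (z, zt))%:E = \int[nu]_z \int[nu]_zt (G1 (z, zt))%:E)%E
    := @iint_swap _ _ _ nu nuS G1 mG1 pG1.
  rewrite /= in h1.
  rewrite h1 h2 h3.
  reflexivity.
have eq2 : (\int[nu]_z \int[nu]_zt (H0 (z, zt) + (H1 (z, zt) + H2 (z, zt)))%:E =
  L_omega nu rho omega f + (L_omega nu rho omega f + C_rho nu rho omega))%E.
  have h1 := @iintD _ _ _ nu nuS H0 (fun p => H1 p + H2 p) mH0
    (measurable_funD mH1 mH2) pH0 (fun p => addr_ge0 (pH1 p) (pH2 p)).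
  have h2 := @iintD _ _ _ nu nuS H1 H2 mH1 mH2 pH1 pH2.
  have h3 : (\int[nu]_z \int[nu]_zt (H1 (z, zt))%:E = \int[nu]_z \int[nu]_zt (H0 (z, zt))%:E)%E
    := @iint_swap _ _ _ nu nuS H0 mH0 pH0.
  rewrite /= in h1.
  rewrite h1 h2 h3.
  reflexivity.
apply: ealg.
  rewrite ge0_fin_numE //.
  by apply: integral_ge0 => z _; apply: integral_ge0 => zt _; rewrite lee_fin; apply: mulr_ge0.
rewrite -eq1 -eq2.
apply: eq_integral => z _; apply: eq_integral => zt _; congr EFin.
rewrite /G0 /G1 /G2 /H0 /H1 /H2 /= (TthN _ _ f z zt) (omsym zt z).

exact: pointwise.
Qed.
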